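(* Let $0<\epsilon<0.5$, let $n\ge3$ and $\ell\ge3$ be integers, and let $\mathrm{ENC}_\epsilon:\mathbb{Z}_2^{n-1}\to\mathbb{Z}_2^n$ be an injective map all of whose images are $\epsilon$-balanced. Define the DNA code $$\mathcal{C}_{\ell,\epsilon}=\{\tau^{-1}(\boldsymbol{c}\|\boldsymbol{y}):\ \boldsymbol{c}\in f(\ell,n),\ \boldsymbol{y}=\mathrm{ENC}_\epsilon(\boldsymbol{x}),\ \boldsymbol{x}\in\mathbb{Z}_2^{n-1}\}\subseteq\Sigma_{\rm DNA}^n.$$ Then every codeword of $\mathcal{C}_{\ell,\epsilon}$ is TC-3-dominant (hence $3$-SSA), $\ell$-run-length limited and GC-$\epsilon$-balanced, and $|\mathcal{C}_{\ell,\epsilon}|=2^{n-1}|f(\ell,n)|$.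
   Context: $\Sigma_{\rm DNA}=\{\mathrm{A},\mathrm{T},\mathrm{C},\mathrm{G}\}$ with complement $\overline{\mathrm A}=\mathrm T$, $\overline{\mathrm T}=\mathrm A$, $\overline{\mathrm C}=\mathrm G$, $\overline{\mathrm G}=\mathrm C$; the reverse-complement of $(x_1,\dots,x_n)$ is $(\overline{x_n},\dots,\overline{x_1})$. A DNA sequence is $m$-SSA if it has no two non-overlapping blocks of consecutive symbols of length $\ge m$ that are reverse-complements of each other. A DNA sequence is TC-$m$-dominant if every block of $m$ consecutive symbols contains more than $m/2$ symbols from $\{\mathrm T,\mathrm C\}$; a binary sequence is ''0''-$m$-dominant if every block of $m$ consecutive symbols contains more than $m/2$ zeros. A sequence is $\ell$-run-length limited if every maximal run of identical consecutive symbols has length at most $\ell$. $f(\ell,n)\subseteq\mathbb{Z}_2^n$ is the set of binary sequences of length $n$ that are ''0''-3-dominant and $\ell$-run-length limited. A binary $\boldsymbol{d}\in\mathbb{Z}_2^n$ is $\epsilon$-balanced if $|\mathrm{wt}(\boldsymbol{d})/n-0.5|\le\epsilon$; a DNA sequence $\boldsymbol{x}$ of length $n$ is GC-$\epsilon$-balanced if $|\mathrm{wt}_{\rm GC}(\boldsymbol{x})/n-0.5|\le\epsilon$, where $\mathrm{wt}_{\rm GC}$ counts positions equal to G or C. $\tau(\mathrm T)=00$, $\tau(\mathrm C)=01$, $\tau(\mathrm A)=10$, $\tau(\mathrm G)=11$, extended symbolwise; $\boldsymbol{x}\|\boldsymbol{y}=(x_1y_1,\dots,x_ny_n)$. *)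

(* Defs.v *)
From HB Require Import structures.
From mathcomp Require Import all_boot all_order all_algebra.
Set Implicit Arguments. Unset Strict Implicit. Unset Printing Implicit Defensive.
Import Order.TTheory GRing.Theory Num.Theory.

Inductive dna := DA | DT | DC | DG.

(* tau : T -> 00, C -> 01, A -> 10, G -> 11 ;  0 = false, 1 = true *)
Definition tau (x : dna) : bool * bool :=
  match x with DT => (false, false) | DC => (false, true)
             | DA => (true, false) | DG => (true, true) end.
Definition tau_inv (p : bool * bool) : dna :=
  match p with (false, false) => DT | (false, true) => DC
             | (true, false) => DA | (true, true) => DG end.
Lemma tauK : cancel tau tau_inv. Proof. by case. Qed.
HB.instance Definition _ := Finite.copy dna (can_type tauK).

Definition dna_comp (x : dna) : dna :=
  match x with DA => DT | DT => DA | DC => DG | DG => DC end.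
Definition revcomp (s : seq dna) : seq dna := rev (map dna_comp s).

Definition block {T : Type} (i k : nat) (s : seq T) : seq T := take k (drop i s).

Definition SSA (m : nat) (s : seq dna) : Prop :=
  ~ exists i j k : nat,
      [/\ m <= k, i + k <= size s, j + k <= size s,
          (i + k <= j) || (j + k <= i)
        & block j k s = revcomp (block i k s)].

Definition dominant {T : Type} (P : pred T) (m : nat) (s : seq T) : bool :=
  [forall i : 'I_(size s).+1, (i + m <= size s) ==> (m < 2 * count P (block i m s))].

Definition isTC (x : dna) : bool := (x == DT) || (x == DC).
Definition isGC (x : dna) : bool := (x == DG) || (x == DC).

Definition TC_dominant (m : nat) (s : seq dna) : bool := dominant isTC m s.
Definition zero_dominant (m : nat) (s : seq bool) : bool := dominant (fun b => ~~ b) m s.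

Definition rll {T : eqType} (l : nat) (s : seq T) : bool :=
  [forall i : 'I_(size s).+1, forall k : 'I_(size s).+1,
     (i + k <= size s) && constant (block i k s) ==> (k <= l)].

Definition f_set (l n : nat) : {set n.-tuple bool} :=
  [set c : n.-tuple bool | zero_dominant 3 c && rll l c].

Local Open Scope ring_scope.

Definition wt (d : seq bool) : nat := count id d.
Definition wtGC (x : seq dna) : nat := count isGC x.

Definition balanced {R : realFieldType} (eps : R) (d : seq bool) : Prop :=
  `| (wt d)%:R / (size d)%:R - 2^-1 | <= eps.
Definition GC_balanced {R : realFieldType} (eps : R) (x : seq dna) : Prop :=
  `| (wtGC x)%:R / (size x)%:R - 2^-1 | <= eps.

Local Close Scope ring_scope.

Definition interleave {n : nat} (c y : n.-tuple bool) : n.-tuple dna :=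
  [tuple tau_inv (tnth c i, tnth y i) | i < n].

Definition code (l n : nat) (ENC : (n - 1).-tuple bool -> n.-tuple bool)
  : {set n.-tuple dna} :=
  [set interleave c (ENC x) | c in f_set l n, x in [set: (n - 1).-tuple bool]].

(* Main.v *)
Require Import Defs.
From HB Require Import structures.
From mathcomp Require Import all_boot all_order all_algebra.
Import Order.TTheory GRing.Theory Num.Theory.

Lemma dominantP (T : Type) (P : pred T) m (s : seq T) :
  dominant P m s <-> forall i, i + m <= size s -> m < 2 * count P (block i m s).
Proof.
split.
- move=> /forallP H i Hi.
  have Hi' : i < (size s).+1 by rewrite ltnS (leq_trans (leq_addr m i)).
  exact: (implyP (H (Ordinal Hi'))).
- by move=> H; apply/forallP => i; apply/implyP; apply: H.
Qed.

Lemma rllP (T : eqType) l (s : seq T) :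
  rll l s <-> forall i k, i + k <= size s -> constant (block i k s) -> k <= l.
Proof.
split.
- move=> /forallP H i k Hik Hc.
  have Hi' : i < (size s).+1 by rewrite ltnS (leq_trans (leq_addr k i)).
  have Hk' : k < (size s).+1 by rewrite ltnS (leq_trans (leq_addl i k)).
  move: (forallP (H (Ordinal Hi')) (Ordinal Hk')) => /implyP; apply.
  by rewrite /= Hik Hc.
- move=> H; apply/forallP => i; apply/forallP => k; apply/implyP => /andP [].
  exact: H.
Qed.

Lemma constant_map (T U : eqType) (f : T -> U) (s : seq T) :
  constant s -> constant (map f s).
Proof.
case: s => [|x s] //= Hs.
rewrite all_map; apply: sub_all Hs => y /= /eqP -> //.
Qed.

Lemma block_map (T U : Type) (f : T -> U) i k (s : seq T) :
  block i k (map f s) = map f (block i k s).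
Proof. by rewrite /block -map_drop -map_take. Qed.

Lemma interleave_val n (c y : n.-tuple bool) :
  val (interleave c y) = [seq tau_inv (tnth c i, tnth y i) | i <- enum 'I_n].
Proof. by []. Qed.

Lemma interleave_fst n (c y : n.-tuple bool) :
  map (fun d => (tau d).1) (interleave c y) = c.
Proof.
rewrite interleave_val -map_comp -[RHS](map_tnth_enum c).
by apply: eq_map => i /=; rewrite /tau /tau_inv; case: (tnth c i); case: (tnth y i).
Qed.

Lemma interleave_snd n (c y : n.-tuple bool) :
  map (fun d => (tau d).2) (interleave c y) = y.
Proof.
rewrite interleave_val -map_comp -[RHS](map_tnth_enum y).
by apply: eq_map => i /=; rewrite /tau /tau_inv; case: (tnth c i); case: (tnth y i).
Qed.

Lemma isTC_tau d : isTC d = ~~ (tau d).1. Proof. by case: d. Qed.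
Lemma isGC_tau d : isGC d = (tau d).2. Proof. by case: d. Qed.
Lemma isTC_comp d : isTC (dna_comp d) = ~~ isTC d. Proof. by case: d. Qed.

Lemma TCdom_SSA (w : seq dna) : TC_dominant 3 w -> SSA 3 w.
Proof.
move=> /dominantP H [i [j [k [Hk Hi Hj _ Heq]]]].
have H1 := H i (leq_trans (leq_add (leqnn i) Hk) Hi).
have Hj3 : j + (k - 3) + 3 <= size w by rewrite -addnA subnK.
have H2 := H _ Hj3.
have Hb : block (j + (k - 3)) 3 w = drop (k - 3) (block j k w).
  by rewrite /block [j + _]addnC -drop_drop take_drop subnKC.
rewrite Hb Heq /revcomp drop_rev size_map in H2.
have Hsz : size (block i k w) = k.
  by rewrite /block size_takel // size_drop leq_subRL // (leq_trans _ Hi) ?leq_addr.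
rewrite Hsz subKn // count_rev -map_take count_map in H2.
have Ht : block i 3 w = take 3 (block i k w).
  by rewrite /block take_takel // ltnW.
rewrite Ht in H1.
move: H1 H2; set t := take 3 _ => H1 H2.
have Hs : size t = 3 by rewrite /t size_takel ?Hsz // ltnW.
have Hc : count (preim dna_comp isTC) t = size t - count isTC t.
  rewrite -(count_predC isTC t) addKn; apply: eq_count => x /=; exact: isTC_comp.
rewrite Hc Hs in H2.
have : count isTC t <= 3 by rewrite -Hs count_size.
move: H1 H2; set a := count isTC t.
by case: a => [|[|[|[|a]]]].
Qed.

Lemma interleave_inj n (c y c' y' : n.-tuple bool) :
  interleave c y = interleave c' y' -> c = c' /\ y = y'.
Proof.
move=> H; split; apply: val_inj.
  by have := congr1 (map (fun d => (tau d).1)) (congr1 val H); rewrite !interleave_fst.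
by have := congr1 (map (fun d => (tau d).2)) (congr1 val H); rewrite !interleave_snd.
Qed.

Theorem theorem1 (R : realFieldType) (eps : R) (n l : nat)
  (ENC : (n - 1).-tuple bool -> n.-tuple bool) :
  (0 < eps)%R -> (eps < 2^-1)%R -> 3 <= n -> 3 <= l ->
  injective ENC -> (forall x, balanced eps (ENC x)) ->
  (forall w, w \in code l ENC ->
     [/\ TC_dominant 3 w, SSA 3 w, rll l w & GC_balanced eps w]) /\
  #|code l ENC| = 2 ^ (n - 1) * #|f_set l n|.
Proof.
move=> _ _ _ _ injE balE; split.
  move=> w /imset2P [c x Hc _ ->].
  rewrite inE in Hc; case/andP: Hc => Hd Hr.
  set y := ENC x.
  have Hdom : TC_dominant 3 (interleave c y).
    apply/dominantP => i Hi.
    move/dominantP: Hd => Hd.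
    have := Hd i; rewrite !size_tuple in Hi *; move=> /(_ Hi).
    rewrite -(interleave_fst _ c y) block_map count_map.
    by rewrite (eq_count (a2 := isTC)) // => d /=; rewrite isTC_tau.
  split => //.
  - exact: TCdom_SSA.
  - apply/rllP => i k Hik Hcst.
    move/rllP: Hr => Hr; apply: (Hr i k); first by rewrite size_tuple; rewrite size_tuple in Hik.
    by rewrite -(interleave_fst _ c y) block_map; apply: constant_map.
  - have := balE x; rewrite /balanced /GC_balanced -/y.
    rewrite !size_tuple /wt /wtGC -(interleave_snd _ c y) count_map.
    by rewrite (eq_count (a2 := isGC)) // => d /=; rewrite isGC_tau.
have -> : code l ENC = [set interleave p.1 (ENC p.2) | p in setX (f_set l n) [set: (n - 1).-tuple bool]].
  apply/setP => w; apply/imset2P/imsetP.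
    by case=> c x Hc Hx ->; exists (c, x) => //; rewrite inE Hc Hx.
  by case=> [[c x]]; rewrite inE => /andP [Hc Hx] ->; exists c x.
rewrite card_in_imset; last first.
  move=> [c x] [c' x'] _ _ /= /interleave_inj [-> /injE ->] //.
by rewrite cardsX cardsT card_tuple card_bool mulnC.
Qed.
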